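(* Let $A$ be an $\mathbb N$-graded $k$-algebra generated by $A_1$ over $A_0$, and let $M$ be a point module over $A$. Then $\mathrm{End}_{\mathrm{QGr}\,A}(\pi^*M)\cong k$.
   Context: $k$ is a field. A point module is a graded right $A$-module $M=\bigoplus_{i\ge0}M_i$ with $M=M_0A$ and $\dim_kM_i=1$ for all $i\ge0$. $\mathrm{QGr}\,A$ is the quotient of the category of $\mathbb Z$-graded right $A$-modules by the torsion modules (modules each of whose elements $m$ satisfies $mA_{\ge n}=0$ for some $n$), with quotient functor $\pi^*$. *)

(* Defs.v *)
From HB Require Import structures.
From mathcomp Require Import all_boot all_order all_algebra.
Set Implicit Arguments. Unset Strict Implicit. Unset Printing Implicit Defensive.
Import GRing.Theory Num.Theory.
Local Open Scope ring_scope.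

Section GradedAlgebra.
Variable k : fieldType.
Variable A : algType k.
Variable G : nat -> {pred A}.

Definition is_Ngraded_algebra : Prop :=
  [/\ (forall i, [/\ 0 \in G i,
                   (forall a b, a \in G i -> b \in G i -> a + b \in G i)
                 & (forall (c : k) a, a \in G i -> c *: a \in G i)]),
      1 \in G 0%N,
      (forall i j a b, a \in G i -> b \in G j -> a * b \in G (i + j)%N),
      (forall a, exists s : seq nat, exists f : nat -> A,
          [/\ uniq s, (forall i, f i \in G i) & a = \sum_(i <- s) f i])
    & (forall (s : seq nat) (f : nat -> A), uniq s -> (forall i, f i \in G i) ->
          \sum_(i <- s) f i = 0 -> forall i, i \in s -> f i = 0)].

Definition generated_in_degree_one : Prop :=
  forall S : {pred A}, subring_closed S -> {subset G 0%N <= S} ->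
    {subset G 1%N <= S} -> forall a, a \in S.

Definition in_Age (n : nat) (a : A) : Prop :=
  exists s : seq nat, exists f : nat -> A,
    [/\ all (fun i => n <= i)%N s, (forall i, f i \in G i) & a = \sum_(i <- s) f i].

Section GradedModule.
Variable M : zmodType.
Variable act : M -> A -> M.
Variable MG : int -> {pred M}.

Definition is_right_module : Prop :=
  [/\ forall m, act m 1 = m,
      forall m a b, act (act m a) b = act m (a * b),
      forall m a b, act m (a + b) = act m a + act m b
    & forall m1 m2 a, act (m1 + m2) a = act m1 a + act m2 a].

Definition is_Zgraded_module : Prop :=
  [/\ (forall i, 0 \in MG i /\
          forall m1 m2, m1 \in MG i -> m2 \in MG i -> m1 - m2 \in MG i),
      (forall i j m a, m \in MG i -> a \in G j -> act m a \in MG (i + j%:Z)),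
      (forall m, exists s : seq int, exists f : int -> M,
          [/\ uniq s, (forall i, f i \in MG i) & m = \sum_(i <- s) f i])
    & (forall (s : seq int) (f : int -> M), uniq s -> (forall i, f i \in MG i) ->
          \sum_(i <- s) f i = 0 -> forall i, i \in s -> f i = 0)].

(* the k-vector space structure on M comes from k -> A, c |-> c%:A *)
Definition kdim_one (P : {pred M}) : Prop :=
  exists2 e, e \in P & e != 0 /\ forall m, m \in P -> exists c : k, m = act e c%:A.

Definition is_point_module : Prop :=
  [/\ is_right_module, is_Zgraded_module,
      (forall i : int, i < 0 -> forall m, m \in MG i -> m = 0),
      (forall i : int, 0 <= i -> kdim_one (MG i))
    & (forall m, exists s : seq (M * A),
          all (fun p => p.1 \in MG 0) s /\ m = \sum_(p <- s) act p.1 p.2)].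

Definition torsion_elt (m : M) : Prop :=
  exists n, forall a, in_Age n a -> act m a = 0.

Definition graded_submodule (P : {pred M}) : Prop :=
  [/\ 0 \in P,
      (forall m1 m2, m1 \in P -> m2 \in P -> m1 - m2 \in P),
      (forall m a, m \in P -> act m a \in P)
    & (forall m, m \in P -> exists s : seq int, exists f : int -> M,
          [/\ uniq s, (forall i, f i \in MG i /\ f i \in P) & m = \sum_(i <- s) f i])].

Definition cotorsion (P : {pred M}) : Prop :=
  forall m, exists n, forall a, in_Age n a -> act m a \in P.

(* A representative of a morphism pi^* M -> pi^* M in QGr A:
   a degree-0 graded A-module map  P -> M / tau M  with P <= M graded and M/P
   torsion, given by a function f : M -> M (values taken modulo tau M). *)
Definition qgr_rep (P : {pred M}) (f : M -> M) : Prop :=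
  [/\ graded_submodule P, cotorsion P,
      (forall m1 m2, m1 \in P -> m2 \in P -> torsion_elt (f (m1 + m2) - f m1 - f m2)),
      (forall m a, m \in P -> torsion_elt (f (act m a) - act (f m) a))
    & (forall i m, m \in P -> m \in MG i ->
          exists2 n, n \in MG i & torsion_elt (f m - n))].

(* two representatives define the same morphism of QGr A (direct limit) *)
Definition qgr_equiv (P1 : {pred M}) (f1 : M -> M) (P2 : {pred M}) (f2 : M -> M)
  : Prop :=
  exists P3 : {pred M},
    [/\ graded_submodule P3, cotorsion P3, {subset P3 <= P1}, {subset P3 <= P2}
      & forall m, m \in P3 -> torsion_elt (f1 m - f2 m)].

Definition allM : {pred M} := fun _ => true.

Definition scal_endo (c : k) : M -> M := fun m => act m c%:A.

(* End_{QGr A}(pi^* M) = k : the structure map k -> End, c |-> c * id,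
   is bijective *)
Definition End_QGr_iso_k : Prop :=
  (forall P f, qgr_rep P f -> exists c : k, qgr_equiv P f allM (scal_endo c)) /\
  (forall c d : k, qgr_equiv allM (scal_endo c) allM (scal_endo d) -> c = d).

End GradedModule.
End GradedAlgebra.

(* Main.v *)
Require Import Defs.
From HB Require Import structures.
From mathcomp Require Import all_boot all_order all_algebra.
From Stdlib Require Import ClassicalEpsilon Classical.
Import Order.TTheory GRing.Theory Num.Theory.
Local Open Scope ring_scope.
Set Implicit Arguments. Unset Strict Implicit.

Section Pf.
Variables (k : fieldType) (A : algType k) (G : nat -> {pred A}).
Hypothesis HA : is_Ngraded_algebra G.
Hypothesis Hgen : generated_in_degree_one G.
Variables (M : zmodType) (act : M -> A -> M) (MG : int -> {pred M}).
Hypothesis HM : is_point_module G act MG.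

Lemma G0 i : 0 \in G i. Proof. by case: HA => H _ _ _ _; case: (H i). Qed.
Lemma G1 : 1 \in G 0. Proof. by case: HA. Qed.
Lemma GM i j a b : a \in G i -> b \in G j -> a * b \in G (i + j). Proof. by case: HA => _ _ H _ _; apply: H. Qed.
Lemma GZ i (c : k) a : a \in G i -> c *: a \in G i. Proof. by case: HA => H _ _ _ _; case: (H i) => _ _; apply. Qed.

Lemma act1 m : act m 1 = m. Proof. by case: HM => [[H _ _ _]]. Qed.
Lemma actA m a b : act (act m a) b = act m (a * b). Proof. by case: HM => [[_ H _ _]]. Qed.
Lemma actDr m a b : act m (a + b) = act m a + act m b. Proof. by case: HM => [[_ _ H _]]. Qed.
Lemma actDl m1 m2 a : act (m1 + m2) a = act m1 a + act m2 a. Proof. by case: HM => [[_ _ _ H]]. Qed.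
Lemma act0l a : act 0 a = 0.
Proof. have h := actDl 0 0 a; rewrite addr0 in h. by apply: (addrI (act 0 a)); rewrite addr0 -h. Qed.
Lemma act0r m : act m 0 = 0.
Proof. have h := actDr m 0 0; rewrite addr0 in h. by apply: (addrI (act m 0)); rewrite addr0 -h. Qed.
Lemma actNl m a : act (- m) a = - act m a.
Proof. by apply/eqP; rewrite -addr_eq0 -actDl addNr act0l. Qed.
Lemma actNr m a : act m (- a) = - act m a.
Proof. by apply/eqP; rewrite -addr_eq0 -actDr addNr act0r. Qed.
Lemma actBl m1 m2 a : act (m1 - m2) a = act m1 a - act m2 a.
Proof. by rewrite actDl actNl. Qed.
Lemma actBr m a b : act m (a - b) = act m a - act m b.
Proof. by rewrite actDr actNr. Qed.
Lemma act_sum (I : Type) (s : seq I) (F : I -> M) a :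
  act (\sum_(i <- s) F i) a = \sum_(i <- s) act (F i) a.
Proof. exact: (big_morph (fun m => act m a) (fun x y => actDl x y a) (act0l a)). Qed.
Lemma act_sumo n (F : 'I_n -> M) a :
  act (\sum_(i < n) F i) a = \sum_(i < n) act (F i) a.
Proof. exact: (big_morph (fun m => act m a) (fun x y => actDl x y a) (act0l a)). Qed.

Lemma MG0 i : 0 \in MG i. Proof. by case: HM => _ [H _ _ _] _ _ _; case: (H i). Qed.
Lemma MGB i m1 m2 : m1 \in MG i -> m2 \in MG i -> m1 - m2 \in MG i.
Proof. by case: HM => _ [H _ _ _] _ _ _; case: (H i) => _; apply. Qed.
Lemma MGN i m : m \in MG i -> - m \in MG i.
Proof. by move=> h; rewrite -sub0r; apply: MGB => //; apply: MG0. Qed.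
Lemma MGD i m1 m2 : m1 \in MG i -> m2 \in MG i -> m1 + m2 \in MG i.
Proof. by move=> h1 h2; rewrite -(opprK m2); apply: MGB => //; apply: MGN. Qed.
Lemma MGact i j m a : m \in MG i -> a \in G j -> act m a \in MG (i + j%:Z).
Proof. by case: HM => _ [_ H _ _] _ _ _; apply: H. Qed.
Lemma MGdec m : exists s : seq int, exists f : int -> M,
          [/\ uniq s, (forall i, f i \in MG i) & m = \sum_(i <- s) f i].
Proof. by case: HM => _ [_ _ H _] _ _ _. Qed.
Lemma MGuniq (s : seq int) (f : int -> M) : uniq s -> (forall i, f i \in MG i) ->
          \sum_(i <- s) f i = 0 -> forall i, i \in s -> f i = 0.
Proof. by case: HM => _ [_ _ _ H] _ _ _; apply: H. Qed.
Lemma MGneg (i : int) m : i < 0 -> m \in MG i -> m = 0.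
Proof. by case: HM => _ _ H _ _ h1 h2; exact: (H i h1 m h2). Qed.
Lemma MGdim (i : int) : 0 <= i -> kdim_one act (MG i).
Proof. by case: HM => _ _ _ H _; apply: H. Qed.
Lemma Mgen m : exists s : seq (M * A),
          all (fun p => p.1 \in MG 0) s /\ m = \sum_(p <- s) act p.1 p.2.
Proof. by case: HM => _ _ _ _ H. Qed.

Lemma actZ m c d : act (act m c%:A) d%:A = act m (c * d)%:A.
Proof. by rewrite actA mulr_algl scalerA mulrC. Qed.

Lemma span (i : int) m x : 0 <= i -> m \in MG i -> m != 0 -> x \in MG i ->
  exists mu : k, x = act m mu%:A.
Proof.
move=> i0 hm m0 hx; case: (MGdim i0) => e he [e0 He].
case: (He m hm) => cm em; case: (He x hx) => cx ex.
have cm0 : cm != 0.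
  apply: contraNneq m0 => c0; by rewrite em c0 scale0r act0r.
exists (cm^-1 * cx); by rewrite em actZ mulrA mulfV // mul1r.
Qed.

Definition pb (P : Prop) : bool := if excluded_middle_informative P then true else false.
Lemma pbP P : pb P <-> P.
Proof. by rewrite /pb; case: excluded_middle_informative. Qed.

Lemma step (i : nat) m : m \in MG i%:Z -> m != 0 -> exists2 a, a \in G 1 & act m a != 0.
Proof.
move=> hm m0; apply: NNPP => hno.
have H0 : forall x a, x \in MG i%:Z -> a \in G 1 -> act x a = 0.
  move=> x a hx ha; have [mu ->] := span (isT : (0 <= i%:Z)) hm m0 hx.
  rewrite actA mulr_algl; case: (eqVneq (act m (mu *: a)) 0) => // hne.
  by exfalso; apply: hno; exists (mu *: a); [exact: GZ | exact: hne].
pose Q x := exists f : nat -> M, (forall j, f j \in MG j%:Z) /\ x = \sum_(0 <= j < i.+1) f j.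
have QB : forall x y, Q x -> Q y -> Q (x - y).
  move=> x y [f [hf ->]] [g [hg ->]]; exists (fun j => f j - g j); split.
    by move=> j; apply: MGB.
  by rewrite sumrB.
have Q0 : Q 0 by exists (fun _ => 0); split; [move=> j; apply: MG0 | rewrite big1].
have QD : forall x y, Q x -> Q y -> Q (x + y).
  move=> x y hx hy; have -> : x + y = x - (0 - y) by rewrite sub0r opprK.
  by apply: (QB) => //; apply: (QB).
have QM : forall j x, (j <= i)%N -> x \in MG j%:Z -> Q x.
  move=> j x hj hx; exists (fun l => if l == j then x else 0); split.
    by move=> l; case: eqP => [->|_] //; apply: MG0.
  by rewrite -big_mkcond /= big_nat1_eq /= ltnS hj.
have QA0 : forall x a, Q x -> a \in G 0 -> Q (act x a).
  move=> x a [f [hf ->]] ha; exists (fun j => act (f j) a); split.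
    by move=> j; have := MGact (hf j) ha; rewrite addr0.
  by rewrite act_sum.
have QA1 : forall x a, Q x -> a \in G 1 -> Q (act x a).
  move=> x a [f [hf ->]] ha; exists (fun j => if j is j'.+1 then act (f j') a else 0); split.
    case=> [|j]; first exact: MG0.
    by have := MGact (hf j) ha; rewrite -PoszD addn1.
  rewrite act_sum big_nat_recr //= big_nat_recl //= (H0 _ _ (hf i) ha) addr0 add0r.
  done.
pose S : {pred A} := fun a => pb (forall x, Q x -> Q (act x a)).
have SA : forall a, a \in S.
  apply: Hgen.
  - split.
    + by rewrite unfold_in; apply/pbP => x; rewrite act1.
    + move=> u v; rewrite !unfold_in => /pbP hu /pbP hv; apply/pbP => x hx.
      by rewrite actBr; apply: (QB); [apply: hu | apply: hv].
    + move=> u v; rewrite !unfold_in => /pbP hu /pbP hv; apply/pbP => x hx.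
      by rewrite -actA; apply: hv; apply: hu.
  - by move=> a ha; rewrite unfold_in; apply/pbP => x hx; apply: QA0.
  - by move=> a ha; rewrite unfold_in; apply/pbP => x hx; apply: QA1.
have QMall : forall x, Q x.
  move=> x; have [s [hs ->]] := Mgen x.
  elim: s hs => [|p s IH] /=; first by rewrite big_nil.
  case/andP => hp hs; rewrite big_cons; apply: QD; last exact: IH.
  have := SA p.2; rewrite unfold_in => /pbP; apply.
  exact: (QM 0%N _ (leq0n i) hp).
have [e he [e0 _]] := MGdim (isT : (0 <= i.+1%:Z)).
have [f [hf ef]] := QMall e.
pose g (l : int) := if l == i.+1%:Z then - e else if (0 <= l) then f `|l|%N else 0.
have hg : forall l, g l \in MG l.
  move=> l; rewrite /g; case: eqP => [->|_]; first exact: MGN.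
  case: (boolP (0 <= l)) => hl; last exact: MG0.
  by have := hf `|l|%N; rewrite gez0_abs.
have := @MGuniq [seq j%:Z | j <- iota 0 i.+2] g.
have Hu : uniq [seq j%:Z | j <- iota 0 i.+2].
  by rewrite map_inj_uniq ?iota_uniq // => a b [].
move=> /(_ Hu hg) H.
have : g i.+1%:Z = 0.
  apply: H; [|by rewrite mem_map ?mem_iota ?add0n ?ltnS ?leqnn // => a b []].
  rewrite big_map -/(index_iota 0 i.+2) big_nat_recr //= {2}/g eqxx ef.
  apply/eqP; rewrite subr_eq0; apply/eqP.
  apply: eq_big_nat => j /andP [_ hj]; rewrite /g.
  have -> : (j%:Z == i.+1%:Z) = false by apply/negbTE; rewrite eqz_nat neq_ltn hj.
  by [].
by rewrite /g eqxx => /eqP; rewrite oppr_eq0 (negbTE e0).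
Qed.

Lemma iterN (n : nat) : forall (i : nat) m, m \in MG i%:Z -> m != 0 ->
  exists2 a, a \in G n & act m a != 0.
Proof.
elim: n => [|n IH] i m hm m0.
  by exists 1; [exact: G1 | rewrite act1].
have [a ha hma] := step hm m0.
have hm' : act m a \in MG (i.+1)%:Z by have := MGact hm ha; rewrite -PoszD addn1.
have [b hb hb0] := IH _ _ hm' hma.
by exists (a * b); [have := GM ha hb; rewrite add1n | rewrite -actA].
Qed.

Lemma iterZ (n : nat) (i : int) m : m \in MG i -> m != 0 ->
  exists2 a, a \in G n & act m a != 0.
Proof.
move=> hm m0; case: (boolP (0 <= i)) => hi.
  by rewrite -(gez0_abs hi) in hm; exact: iterN hm m0.
have hlt : i < 0 by rewrite ltNge.
by rewrite (MGneg hlt hm) eqxx in m0.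
Qed.

Lemma Age n a : a \in G n -> in_Age G n a.
Proof.
move=> ha; exists [:: n], (fun j => if j == n then a else 0); split.
- by rewrite /= leqnn.
- by move=> j; case: eqP => [->|_] //; apply: G0.
- by rewrite big_seq1 eqxx.
Qed.

Lemma tf x : torsion_elt G act x -> x = 0.
Proof.
move=> [n Hn]; have [s [f [us hf ex]]] := MGdec x; rewrite ex.
suff H : forall j, j \in s -> f j = 0 by rewrite big1_seq // => j /andP [_ /H].
move=> j js; case: (eqVneq (f j) 0) => // fj0; exfalso.
have [a ha ha0] := iterZ n (hf j) fj0.
have hx := Hn a (Age ha); rewrite ex act_sum in hx.
have := @MGuniq [seq l + n%:Z | l <- s] (fun l => act (f (l - n%:Z)) a).
have Hu : uniq [seq l + n%:Z | l <- s] by rewrite map_inj_uniq // => u v /addIr.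
have Hm : forall l, act (f (l - n%:Z)) a \in MG l.
  by move=> l; have := MGact (hf (l - n%:Z)) ha; rewrite subrK.
have Hs : \sum_(l <- [seq l + n%:Z | l <- s]) act (f (l - n%:Z)) a = 0.
  by rewrite big_map; under eq_bigr do rewrite addrK.
move=> /(_ Hu Hm Hs (j + n%:Z) (map_f _ js)); rewrite addrK => h.
by rewrite h eqxx in ha0.
Qed.

Lemma comm x c a : act (act x c%:A) a = act (act x a) c%:A.
Proof. by rewrite !actA mulr_algl mulr_algr. Qed.

Lemma cancelA x d : act x d%:A = 0 -> d != 0 -> x = 0.
Proof.
move=> h d0; rewrite -(act1 x) -(scale1r (1 : A)) -(mulfV d0) -actZ h act0l //.
Qed.

Lemma part1 P f : qgr_rep G act MG P f -> exists c : k, qgr_equiv G act MG P f (@allM M) (scal_endo act c).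
Proof.
move=> [[P0 PB Pact Pdec] cP fadd fact fdeg].
have PD : forall m1 m2, m1 \in P -> m2 \in P -> m1 + m2 \in P.
  move=> m1 m2 h1 h2; have -> : m1 + m2 = m1 - (0 - m2) by rewrite sub0r opprK.
  by apply: (PB) => //; apply: (PB).
have fadd' : forall m1 m2, m1 \in P -> m2 \in P -> f (m1 + m2) = f m1 + f m2.
  move=> m1 m2 h1 h2; have h := tf (fadd _ _ h1 h2).
  by apply/eqP; rewrite -subr_eq0 opprD addrA h.
have fact' : forall m a, m \in P -> f (act m a) = act (f m) a.
  by move=> m a h; apply/eqP; rewrite -subr_eq0; apply/eqP; apply: tf; apply: fact.
have fdeg' : forall i m, m \in P -> m \in MG i -> f m \in MG i.
  move=> i m h1 h2; have [n hn ht] := fdeg i m h1 h2.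
  have h := tf ht; have -> : f m = n by apply/eqP; rewrite -subr_eq0 h.
  done.
have f0 : f 0 = 0.
  have := fadd' 0 0 P0 P0; rewrite addr0 => h.
  by apply: (addrI (f 0)); rewrite addr0 -h.
have [e he [e0 _]] := MGdim (lexx 0).
have [n0 hn0] := cP e.
have [a0 ha0 hu] := iterZ n0 he e0.
set u := act e a0 in hu.
have uP : u \in P by apply: hn0; apply: Age.
have uG : u \in MG n0%:Z by have := MGact he ha0; rewrite add0r.
have [c hc] := span (isT : 0 <= n0%:Z) uG hu (fdeg' _ _ uP uG).
exists c.
have Hhom : forall i m, m \in P -> m \in MG i -> f m = act m c%:A.
  move=> i m mP mG; case: (eqVneq m 0) => [->|m0]; first by rewrite f0 act0l.
  have hi : 0 <= i.
    case: (boolP (0 <= i)) => // hi0; have hlt : i < 0 by rewrite ltNge.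
    by rewrite (MGneg hlt mG) eqxx in m0.
  have [a ha hma] := iterZ n0 mG m0.
  have [b hb hub] := iterZ `|i|%N uG hu.
  have maG : act m a \in MG (i + n0%:Z) by apply: MGact.
  have ubG : act u b \in MG (i + n0%:Z).
    by have := MGact uG hb; rewrite gez0_abs // addrC.
  have [lam hl] := span (addr_ge0 hi (isT : 0 <= n0%:Z)) ubG hub maG.
  have [mu hmu] := span hi mG m0 (fdeg' _ _ mP mG).
  have E1 : f (act m a) = act (act m a) mu%:A by rewrite fact' // hmu comm.
  have E2 : f (act m a) = act (act m a) c%:A.
    rewrite hl fact'; last by apply: Pact.
    by rewrite fact' // hc comm actZ mulrC -actZ.
  have : act (act m a) (mu - c)%:A = 0 by rewrite scalerBl actBr -E1 -E2 subrr.
  case: (eqVneq mu c) => [emu _|muc]; first by rewrite hmu emu.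
  move=> H; have hz : act m a = 0 by apply: (cancelA H); rewrite subr_eq0.
  by rewrite hz eqxx in hma.
have Hall : forall m, m \in P -> f m = act m c%:A.
  move=> m mP; have [s [g [_ hg ->]]] := Pdec m mP.
  suff : \sum_(i <- s) g i \in P /\ f (\sum_(i <- s) g i) = act (\sum_(i <- s) g i) c%:A by case.
  elim: s => [|j s [IH1 IH2]]; first by rewrite big_nil f0 act0l.
  have [gj1 gj2] := hg j.
  rewrite big_cons; split; first by apply: PD.
  by rewrite fadd' // IH2 (Hhom j) // actDl.
exists P; split => //.
move=> m mP; rewrite /scal_endo Hall // subrr; exists 0%N => a _; exact: act0l.
Qed.

Lemma part2 (c d : k) : qgr_equiv G act MG (@allM M) (scal_endo act c) (@allM M) (scal_endo act d) -> c = d.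
Proof.
move=> [P3 [_ cP _ _ Hd]].
case: (eqVneq c d) => // cd; exfalso.
have [e he [e0 _]] := MGdim (lexx 0).
have [n hn] := cP e.
have [a ha hea] := iterZ n he e0.
have xP : act e a \in P3 by apply: hn; apply: Age.
have := tf (Hd _ xP); rewrite /scal_endo -actBr -scalerBl => H.
have hz : act e a = 0 by apply: (cancelA H); rewrite subr_eq0.
by rewrite hz eqxx in hea.
Qed.

End Pf.

Theorem lemma10p1 (k : fieldType) (A : algType k) (G : nat -> {pred A})
  (HA : is_Ngraded_algebra G) (Hgen : generated_in_degree_one G)
  (M : zmodType) (act : M -> A -> M) (MG : int -> {pred M})
  (HM : is_point_module G act MG) :
  End_QGr_iso_k G act MG.
Proof.
split; [exact: (part1 HA Hgen HM) | exact: (part2 HA Hgen HM)].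
Qed.
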